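(* Assume $\omega_\ell>0$, $\sum_\ell\omega_\ell=1$, $\sum_\ell\omega_\ell d_\ell>0$, and that for a constant $c_1\ge1$, $\|\omega\|_\infty\sum_\ell\sum_{j\in J}p^{(\ell)}_{ij}\le c_1\sum_\ell\sum_{j\in J}\omega_\ell p^{(\ell)}_{ij}$ for all $i\in[n]$, $J\subseteq[n]$. Fix $\alpha>0$ and $r\ge1$. Then there is a constant $C=C(c_1)$ such that with probability at least $1-n^{-r}$: for every $m\in[n]$ with $\sqrt{m/n}\le\alpha$ and every $I,J\subseteq[n]$ with $|I|=|J|=m$, all but at most $m\|\omega\|_\infty/(\alpha\sum_\ell\omega_\ell d_\ell)$ indices $i\in I$ satisfy $\sum_{j\in J}\bar A_{ij}\le Cr\alpha\sum_\ell\omega_\ell d_\ell$.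
   Context: Here $A^{(1)},\dots,A^{(L)}$ are random $n\times n$ matrices whose entries $A^{(\ell)}_{ij}\sim\mathrm{Bern}(p^{(\ell)}_{ij})$, $i,j\in[n]$, $\ell\in[L]$, are all mutually independent (no symmetry imposed). $\bar A=\sum_\ell\omega_\ell A^{(\ell)}$, $d_\ell=\max_{i,j}np^{(\ell)}_{ij}$, $\|\omega\|_\infty=\max_\ell\omega_\ell$. *)

(* Defs.v *)
From HB Require Import structures.
From mathcomp Require Import all_boot all_order all_algebra.
From mathcomp Require Import all_classical all_reals all_analysis.
Set Implicit Arguments. Unset Strict Implicit. Unset Printing Implicit Defensive.
Import Order.TTheory GRing.Theory Num.Theory.
Local Open Scope ring_scope.

(* Sample space: an outcome assigns a bit to every entry A^(l)_{ij},
   indexed by k = (l, i, j). *)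
Definition outcome (L n : nat) := {ffun 'I_L * 'I_n * 'I_n -> bool}.

Definition bern_weight (R : realType) (L n : nat)
  (p : 'I_L -> 'I_n -> 'I_n -> R) (x : outcome L n) : R :=
  \prod_(k : 'I_L * 'I_n * 'I_n)
     (if x k then p k.1.1 k.1.2 k.2 else 1 - p k.1.1 k.1.2 k.2).

Definition Prob (R : realType) (L n : nat)
  (p : 'I_L -> 'I_n -> 'I_n -> R) (E : outcome L n -> Prop) : R :=
  \sum_(x : outcome L n | `[< E x >]) bern_weight p x.

Definition Amat (R : realType) (L n : nat) (x : outcome L n) (l : 'I_L)
  (i j : 'I_n) : R := (x (l, i, j) : nat)%:R.

Definition Abar (R : realType) (L n : nat) (w : 'I_L -> R) (x : outcome L n)
  (i j : 'I_n) : R := \sum_(l < L) w l * Amat R x l i j.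

(* d_l = max_{i,j} n p^(l)_{ij}  (entries are nonnegative, so max with 0 base). *)
Definition dl (R : realType) (L n : nat) (p : 'I_L -> 'I_n -> 'I_n -> R)
  (l : 'I_L) : R := \big[Num.max/0]_(i < n) \big[Num.max/0]_(j < n) (n%:R * p l i j).

(* ||w||_inf = max_l w_l (weights are positive). *)
Definition wmax (R : realType) (L : nat) (w : 'I_L -> R) : R :=
  \big[Num.max/0]_(l < L) w l.

(* Main.v *)
Require Import Defs.
From HB Require Import structures.
From mathcomp Require Import all_boot all_order all_algebra.
From mathcomp Require Import all_classical all_reals all_analysis.
From mathcomp Require Import ring lra.
Import Order.TTheory GRing.Theory Num.Theory.
Local Open Scope ring_scope.
Set Implicit Arguments. Unset Strict Implicit. Unset Printing Implicit Defensive.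

Section Prob.
Variables (R : realType) (L n : nat) (p : 'I_L -> 'I_n -> 'I_n -> R).
Hypothesis hp : forall l i j, 0 <= p l i j <= 1.

Local Notation T := ('I_L * 'I_n * 'I_n)%type.
Definition pk (k : T) : R := p k.1.1 k.1.2 k.2.

Definition Ex (g : outcome L n -> R) : R := \sum_x bern_weight p x * g x.

Lemma prod_factor (F : T -> bool -> R) :
  \sum_(x : outcome L n) \prod_k F k (x k) = \prod_k (F k true + F k false).
Proof.
rewrite -bigA_distr_bigA /=.
by apply: eq_bigr => k _; rewrite big_bool.
Qed.

Lemma weight_ge0 x : 0 <= bern_weight p x.
Proof.
rewrite /bern_weight; apply: prodr_ge0 => k _.
have /andP[h0 h1] := hp k.1.1 k.1.2 k.2.
by case: (x k) => //; rewrite subr_ge0.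
Qed.

Lemma weight_sum : \sum_x bern_weight p x = 1.
Proof.
rewrite /bern_weight (prod_factor (fun k b => if b then pk k else 1 - pk k)).
by rewrite big1 // => k _; rewrite addrC subrK.
Qed.

Lemma Ex_exp (c : T -> R) :
  Ex (fun x => expR (\sum_k c k * (x k)%:R)) =
  \prod_k (1 - pk k + pk k * expR (c k)).
Proof.
rewrite /Ex /bern_weight /=.
under eq_bigr => x _ do rewrite expR_sum -big_split /=.
rewrite (prod_factor (fun k b => (if b then pk k else 1 - pk k) * expR (c k * b%:R))).
apply: eq_bigr => k _ /=; rewrite mulr1 mulr0 expR0 mulr1 addrC.
done.
Qed.

Lemma Ex_exp_le (c : T -> R) :
  Ex (fun x => expR (\sum_k c k * (x k)%:R)) <=
  expR (\sum_k pk k * (expR (c k) - 1)).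
Proof.
rewrite Ex_exp expR_sum; apply: ler_prod => k _.
have /andP[h0 h1] := hp k.1.1 k.1.2 k.2.
apply/andP; split.
  by apply: addr_ge0; [rewrite subr_ge0 | apply: mulr_ge0 => //; apply: expR_ge0].
apply: le_trans (expR_ge1Dx _); rewrite le_eqVlt; apply/orP; left; apply/eqP.
ring.
Qed.

Lemma Ex_ge0 g : (forall x, 0 <= g x) -> 0 <= Ex g.
Proof. by move=> hg; apply: sumr_ge0 => x _; apply: mulr_ge0 => //; apply: weight_ge0. Qed.

Lemma ExZ a g : Ex (fun x => a * g x) = a * Ex g.
Proof. by rewrite /Ex mulr_sumr; apply: eq_bigr => x _; rewrite mulrCA. Qed.

Lemma Ex_sum (I : finType) (P : pred I) (f : I -> outcome L n -> R) :
  Ex (fun x => \sum_(a | P a) f a x) = \sum_(a | P a) Ex (f a).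
Proof.
rewrite /Ex; under eq_bigr => x _ do rewrite mulr_sumr.
by rewrite exchange_big.
Qed.

Lemma Ex_if (b : bool) g : Ex (fun x => if b then g x else 0) = if b then Ex g else 0.
Proof. by case: b => //; rewrite /Ex big1 // => x _; rewrite mulr0. Qed.

Lemma Ex_le g1 g2 : (forall x, g1 x <= g2 x) -> Ex g1 <= Ex g2.
Proof.
move=> h; apply: ler_sum => x _; apply: ler_wpM2l; [exact: weight_ge0|exact: h].
Qed.

Lemma Prob_ge (E : outcome L n -> Prop) (G : outcome L n -> R) :
  (forall x, 0 <= G x) -> (forall x, ~ E x -> 1 <= G x) ->
  1 - Ex G <= Prob p E.
Proof.
move=> G0 HG; rewrite /Prob -weight_sum (bigID (fun x => `[< E x >])) /=.
rewrite -addrA gerDl subr_le0 /Ex.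
rewrite [X in _ <= X](bigID (fun x => `[< E x >])) /= ler_wpDl //.
  by apply: sumr_ge0 => x _; apply: mulr_ge0 => //; apply: weight_ge0.
apply: ler_sum => x /asboolPn hx.
by rewrite -[X in X <= _]mulr1 ler_wpM2l ?weight_ge0 ?HG.
Qed.

End Prob.
Section Block.
Variables (R : realType) (L n : nat).
Local Notation T := ('I_L * 'I_n * 'I_n)%type.

Lemma sumT (G : T -> R) :
  \sum_(k : T) G k = \sum_(l < L) \sum_(i < n) \sum_(j < n) G (l, i, j).
Proof.
rewrite pair_bigA /= pair_bigA /=.
by apply: eq_bigr => -[[l i] j].
Qed.

Lemma block_sum (F : 'I_L -> 'I_n -> 'I_n -> R) (B J : {set 'I_n}) :
  \sum_(k : T) (if (k.1.2 \in B) && (k.2 \in J) then F k.1.1 k.1.2 k.2 else 0)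
  = \sum_(i in B) \sum_(j in J) \sum_(l < L) F l i j.
Proof.
rewrite sumT /= exchange_big /=.
rewrite [RHS]big_mkcond /=; apply: eq_bigr => i _.
rewrite exchange_big /=.
case: (i \in B) => /=; last by rewrite big1 // => j _; rewrite big1.
rewrite [RHS]big_mkcond /=.
by apply: eq_bigr => j _; case: (j \in J) => //; rewrite big1.
Qed.
End Block.
Lemma expm1_le (R : realType) (a : R) : 0 <= a -> expR a - 1 <= a * expR a.
Proof.
move=> a0; have h := expR_ge1Dx (- a).
have e : expR (- a) * expR a = 1 by rewrite -expRD addNr expR0.
have ea := expR_gt0 a.
have : (1 - a) * expR a <= 1.
  by rewrite -[X in _ <= X]e; exact: (ler_wpM2r (ltW ea) h).
nra.
Qed.

Lemma wmax_ge (R : realType) (L : nat) (w : 'I_L -> R) l : w l <= wmax w.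
Proof. rewrite /wmax. exact: (le_bigmax _ (fun l => w l) l). Qed.

Lemma dl_ge (R : realType) (L n : nat) (p : 'I_L -> 'I_n -> 'I_n -> R) l i j :
  n%:R * p l i j <= dl p l.
Proof.
rewrite /dl; apply: le_trans (le_bigmax _ _ i).
exact: (le_bigmax _ (fun j => n%:R * p l i j) j).
Qed.
Section Chern.
Variables (R : realType) (L n : nat) (p : 'I_L -> 'I_n -> 'I_n -> R) (w : 'I_L -> R).
Hypothesis hp : forall l i j, 0 <= p l i j <= 1.
Hypothesis hw : forall l, 0 < w l.
Local Notation T := ('I_L * 'I_n * 'I_n)%type.

Definition cBJ (B J : {set 'I_n}) (k : T) : R :=
  if (k.1.2 \in B) && (k.2 \in J) then w k.1.1 else 0.
Definition SBJ (B J : {set 'I_n}) (x : outcome L n) : R :=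
  \sum_k cBJ B J k * (x k)%:R.

Lemma SBJ_Abar B J x : SBJ B J x = \sum_(i in B) \sum_(j in J) Abar w x i j.
Proof.
rewrite /SBJ /Abar -(block_sum (fun l i j => w l * Amat R x l i j)).
apply: eq_bigr => -[[l i] j] _; rewrite /cBJ /Amat /=.
by case: ifP => _; rewrite ?mul0r.
Qed.

Lemma chernoff_block (B J : {set 'I_n}) (lam a : R) :
  (0 < n)%N -> 0 <= lam ->
  Ex p (fun x => expR (lam * (SBJ B J x - a))) <=
  expR (lam * (expR (lam * wmax w) *
     (#|B|%:R * #|J|%:R * ((\sum_(l < L) w l * dl p l) / n%:R)) - a)).
Proof.
move=> n0 lam0.
have e1 : forall x, expR (lam * (SBJ B J x - a)) =
   expR (- (lam * a)) * expR (\sum_k (lam * cBJ B J k) * (x k)%:R).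
  move=> x; rewrite -expRD /SBJ mulrBr addrC mulr_sumr; congr (expR (_ + _)).
  by apply: eq_bigr => k _; rewrite mulrA.
under eq_fun => x do rewrite e1.
rewrite ExZ.
set z := expR (lam * wmax w).
have hn : 0 < n%:R :> R by rewrite ltr0n.
apply: le_trans (ler_wpM2l (expR_ge0 _) (Ex_exp_le hp _)) _.
rewrite -expRD ler_expR mulrBr addrC lerD2r.
apply: le_trans (_ : \sum_k lam * z *
   (if (k.1.2 \in B) && (k.2 \in J) then w k.1.1 * dl p k.1.1 / n%:R else 0) <= _).
  apply: ler_sum => k _; rewrite /cBJ /pk.
  have /andP[p0 p1] := hp k.1.1 k.1.2 k.2.
  case: ifP => _; last by rewrite !mulr0 expR0 subrr mulr0.
  have wk := hw k.1.1.
  have hwm := wmax_ge w k.1.1.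
  have hd := dl_ge p k.1.1 k.1.2 k.2.
  have h1 := expm1_le (mulr_ge0 lam0 (ltW wk)).
  have h2 : expR (lam * w k.1.1) <= z by rewrite ler_expR; exact: (ler_wpM2l lam0 hwm).
  have hpd : p k.1.1 k.1.2 k.2 <= dl p k.1.1 / n%:R by rewrite ler_pdivlMr // mulrC.
  set P := p k.1.1 k.1.2 k.2 in p0 p1 hd hpd *.
  set E := expR (lam * w k.1.1) in h1 h2 *.
  set d := dl p k.1.1 / n%:R in hpd *.
  apply: le_trans (_ : P * (lam * w k.1.1 * z) <= _).
    apply: (ler_wpM2l p0); apply: le_trans h1 _.
    by apply: ler_wpM2l h2; apply: mulr_ge0 => //; exact: ltW.
  have lw : 0 <= lam * w k.1.1 * z by apply: mulr_ge0; [apply: mulr_ge0 => //; exact: ltW | exact: expR_ge0].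
  apply: le_trans (ler_wpM2r lw hpd) _.
  by rewrite le_eqVlt; apply/orP; left; apply/eqP; rewrite /d; ring.
rewrite -mulr_sumr.
rewrite (_ : \sum_k _ = \sum_(i in B) \sum_(j in J) \sum_(l < L) (w l * dl p l / n%:R)); last first.
  by rewrite -(block_sum (fun l i j => w l * dl p l / n%:R)).
have -> : \sum_(i in B) \sum_(j in J) \sum_(l < L) (w l * dl p l / n%:R) =
   #|B|%:R * #|J|%:R * ((\sum_(l < L) w l * dl p l) / n%:R).
  rewrite (eq_bigr (fun i => (\sum_(l < L) w l * dl p l / n%:R) *+ #|J|)); last first.
    by move=> i _; rewrite sumr_const.
  rewrite sumr_const -mulr_suml.

  ring.
by rewrite -mulrA.
Qed.
End Chern.
Lemma sum_setpow (R : realType) n (y : R) :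
  \sum_(B : {set 'I_n}) y ^+ #|B| = (y + 1) ^+ n.
Proof.
rewrite exprD1n.
transitivity (\sum_(B : {set 'I_n}) \sum_(k < n.+1) (if #|B| == k then y ^+ k else 0)).
  apply: eq_bigr => B _.
  have hB : (#|B| < n.+1)%N by rewrite ltnS; apply: leq_trans (max_card B) _; rewrite card_ord.
  rewrite (bigD1 (Ordinal hB)) //= eqxx big1 ?addr0 // => k hk.
  case: eqP => // e; move: hk; rewrite -val_eqE /= e eqxx //.
rewrite exchange_big; apply: eq_bigr => k _.
rewrite -big_mkcond /= sumr_const.
have := card_draws 'I_n k; rewrite card_ord cardsE => <-.
done.
Qed.

Lemma count_sets (R : realType) (n m : nat) : (1 <= m)%N -> (m <= n)%N ->
  \sum_(B : {set 'I_n}) (if (#|B| <= m)%N then 1 else 0 : R)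
  <= expR (m%:R * (1 + ln (n%:R / m%:R))).
Proof.
move=> m1 mn.
have m0 : 0 < m%:R :> R by rewrite ltr0n.
have n0 : 0 < n%:R :> R by rewrite ltr0n; apply: leq_trans mn.
set y : R := m%:R / n%:R.
have y0 : 0 <= y by rewrite /y divr_ge0 // ltW.
have y1 : y <= 1 by rewrite /y ler_pdivrMr // mul1r ler_nat.
have hq : 0 < n%:R / m%:R :> R by apply: divr_gt0.
apply: le_trans (_ : \sum_(B : {set 'I_n}) (n%:R / m%:R) ^+ m * y ^+ #|B| <= _).
  apply: ler_sum => B _; case: ifP => hB; last first.
    by apply: mulr_ge0; [apply: exprn_ge0; exact: ltW| exact: exprn_ge0].
  apply: le_trans (_ : (n%:R / m%:R) ^+ m * y ^+ m <= _).
    rewrite -exprMn /y mulrA divfK ?divff ?expr1n //; apply: lt0r_neq0 => //.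
  apply: ler_wpM2l; first by apply: exprn_ge0; exact: ltW.
  exact: ler_wiXn2l.
rewrite -mulr_sumr sum_setpow.
rewrite mulrDr mulr1 [m%:R + _]addrC expRD.
apply: ler_pM.
- by apply: exprn_ge0; exact: ltW.
- by apply: exprn_ge0; rewrite addr_ge0.
- by rewrite expRM_natl lnK // posrE.
- apply: le_trans (_ : expR y ^+ n <= _).
    apply: lerXn2r; rewrite ?nnegrE ?addr_ge0 ?expR_ge0 //.
    by rewrite addrC expR_ge1Dx.
  by rewrite -expRM_natr /y divfK // lt0r_neq0.
Qed.
Lemma q_facts (R : realType) (n m : nat) (alpha : R) :
  (1 <= m)%N -> (m <= n)%N -> 0 < alpha -> Num.sqrt (m%:R / n%:R) <= alpha ->
  1 <= n%:R * alpha / m%:R /\ ln (n%:R / m%:R) <= 2 * ln (n%:R * alpha / m%:R).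
Proof.
move=> m1 mn a0 hs.
have m0 : 0 < m%:R :> R by rewrite ltr0n.
have n0 : 0 < n%:R :> R by rewrite ltr0n; apply: leq_trans mn.
have hmn : m%:R / n%:R <= alpha ^+ 2.
  rewrite -(sqr_sqrtr (a := m%:R / n%:R)); last by rewrite divr_ge0 // ltW.
  by rewrite lerXn2r // nnegrE ?sqrtr_ge0 // ltW.
have hq2 : n%:R / m%:R <= (n%:R * alpha / m%:R) ^+ 2.
  have e : (n%:R * alpha / m%:R) ^+ 2 = n%:R / m%:R * (alpha ^+ 2 / (m%:R / n%:R)).
    by field; rewrite !lt0r_neq0.
  rewrite e -[X in X <= _]mulr1; apply: ler_wpM2l; first by rewrite divr_ge0 // ltW.
  by rewrite ler_pdivlMr ?mul1r // divr_gt0.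
have h1 : 1 <= n%:R / m%:R :> R by rewrite ler_pdivlMr // mul1r ler_nat.
have q0 : 0 < n%:R * alpha / m%:R by rewrite divr_gt0 // mulr_gt0.
split.
  rewrite leNgt; apply/negP => hlt.
  have : (n%:R * alpha / m%:R) ^+ 2 < 1.
    by rewrite expr2; nra.
  by rewrite ltNge (le_trans h1 hq2).
have -> : 2 * ln (n%:R * alpha / m%:R) = ln ((n%:R * alpha / m%:R) ^+ 2) :> R by rewrite lnXn // mulr2n; ring.
by rewrite ler_ln ?posrE ?exprn_gt0 // divr_gt0.
Qed.

Lemma M_ge (R : realType) (n m : nat) : (1 <= m)%N -> (m <= n)%N ->
  1 + ln (n%:R : R) <= m%:R * (1 + ln (n%:R / m%:R)).
Proof.
move=> m1 mn.
have m0 : 0 < m%:R :> R by rewrite ltr0n.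
have m1' : 1 <= m%:R :> R by rewrite ler1n.
have n0 : 0 < n%:R :> R by rewrite ltr0n; apply: leq_trans mn.
rewrite ln_div ?posrE //.
have hlm : ln (m%:R : R) <= m%:R - 1.
  have := le_ln1Dx (x := m%:R - 1 : R); rewrite [1 + _]addrC subrK; apply.
  have : (1 : R) <= m%:R by rewrite ler1n. lra.
have hmn : ln (m%:R : R) <= ln n%:R by rewrite ler_ln ?posrE // ler_nat.
have hm0 : 0 <= ln (m%:R : R) by apply: ln_ge0.
nra.
Qed.

Lemma final_ineq (R : realType) (n m : nat) (alpha r : R) :
  (1 <= m)%N -> (m <= n)%N -> 0 < alpha -> Num.sqrt (m%:R / n%:R) <= alpha ->
  1 <= r ->
  2 * (m%:R * (1 + ln (n%:R / m%:R))) -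
    (1 + ln (n%:R * alpha / m%:R)) * m%:R * (12 * r - 4) <= - (r + 1) * ln n%:R.
Proof.
move=> m1 mn a0 hs r1.
have [hq hl] := q_facts m1 mn a0 hs.
have hM := M_ge R m1 mn.
have m0 : 0 < m%:R :> R by rewrite ltr0n.
have hl0 : 0 <= ln (n%:R / m%:R : R).
  apply: ln_ge0; rewrite ler_pdivlMr // mul1r ler_nat //.
have hq0 : 0 <= ln (n%:R * alpha / m%:R) by apply: ln_ge0.
set l := ln (n%:R / m%:R) in hl hl0 hM *.
set u := ln (n%:R * alpha / m%:R) in hl hq0 *.
set N := ln (n%:R : R) in hM *.
set M := m%:R * (1 + l) in hM *.
have hMu : M * (6 * r - 2) <= (1 + u) * m%:R * (12 * r - 4).
  rewrite /M.
  have : 0 <= m%:R * (12 * r - 4) * (u - l / 2) by apply: mulr_ge0; [apply: mulr_ge0; [exact: ltW|lra]|lra].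
  nra.
have hN0 : 0 <= N by rewrite /N; apply: ln_ge0; rewrite ler1n; apply: leq_trans mn.
have h1 : 0 <= M * (5 * r - 5) by apply: mulr_ge0; lra.
have h2 : 0 <= (r + 1) * (M - 1 - N) by apply: mulr_ge0; lra.
nra.
Qed.
Lemma expR1_le4 (R : realType) : expR (1 : R) <= 4.
Proof.
have h := expR_ge1Dx (- (1 / 2) : R).
have e : expR (1 / 2 : R) * expR (- (1 / 2)) = 1 by rewrite -expRD subrr expR0.
have e2 : expR (1 : R) = expR (1 / 2) * expR (1 / 2) by rewrite -expRD; congr expR; field.
have a0 := expR_gt0 (1 / 2 : R).
rewrite e2.
set a := expR (1 / 2 : R) in e a0 *.
set b := expR (- (1 / 2) : R) in h e *.
have : a <= 2 by nra.
nra.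
Qed.

Lemma sum_ge_term (R : realType) (I : finType) (F : I -> R) i0 :
  (forall i, 0 <= F i) -> F i0 <= \sum_i F i.
Proof.
move=> h; rewrite (bigD1 i0) //= lerDl; apply: sumr_ge0 => i _; exact: h.
Qed.

Lemma Ex_sumT (R : realType) L n (p : 'I_L -> 'I_n -> 'I_n -> R)
   (I : finType) (f : I -> outcome L n -> R) :
  Ex p (fun x => \sum_a f a x) = \sum_a Ex p (f a).
Proof. exact: Ex_sum. Qed.

Unset Implicit Arguments.

Theorem mainTheorem13 (R : realType) (c1 : R) (hc1 : 1 <= c1) :
  exists C : R, 0 < C /\
  forall (n L : nat) (p : 'I_L -> 'I_n -> 'I_n -> R) (w : 'I_L -> R)
         (alpha r : R),
    (forall l i j, 0 <= p l i j <= 1) ->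
    (forall l, 0 < w l) ->
    \sum_(l < L) w l = 1 ->
    0 < \sum_(l < L) w l * dl p l ->
    (forall (i : 'I_n) (J : {set 'I_n}),
       wmax w * (\sum_(l < L) \sum_(j in J) p l i j)
       <= c1 * (\sum_(l < L) \sum_(j in J) w l * p l i j)) ->
    0 < alpha -> 1 <= r ->
    1 - (n%:R) `^ (- r) <=
    Prob p (fun x : outcome L n =>
      forall (m : nat), (1 <= m <= n)%N ->
        Num.sqrt (m%:R / n%:R) <= alpha ->
        forall I J : {set 'I_n}, #|I| = m -> #|J| = m ->
          (#|[set i in I | ~~ (\sum_(j in J) Abar w x i j
                               <= C * r * alpha * \sum_(l < L) w l * dl p l)]|)%:R
          <= m%:R * wmax w / (alpha * \sum_(l < L) w l * dl p l)).
Proof.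
exists 12; split; first by rewrite ltr0n.
move=> n L p w alpha r hp hw _ hD _ ha hr.
set D := \sum_(l < L) w l * dl p l in hD *.
set W := wmax w.
have W0 : 0 < W.
  case: (pickP (fun _ : 'I_L => true)) => [l0 _|H].
    exact: lt_le_trans (hw l0) (wmax_ge w l0).
  by move: hD; rewrite /D big_pred0 ?ltxx.
set t := 12 * r * alpha * D.
pose u (m : nat) : R := 1 + ln (n%:R * alpha / m%:R).
pose lam (m : nat) : R := u m / W.
pose cond (m : nat) (B J : {set 'I_n}) : bool :=
  [&& (1 <= m)%N, (m <= n)%N, Num.sqrt (m%:R / n%:R) <= alpha, (#|B| <= m)%N, #|J| == m
    & m%:R * W < #|B|%:R * alpha * D].
pose G (x : outcome L n) : R := \sum_(m < n.+1) \sum_(B : {set 'I_n}) \sum_(J : {set 'I_n})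
   (if cond m B J then expR (lam m * (SBJ w B J x - #|B|%:R * t)) else 0).
have G0 : forall x, 0 <= G x.
  move=> x; apply: sumr_ge0 => m _; apply: sumr_ge0 => B _; apply: sumr_ge0 => J _.
  by case: ifP => _ //; exact: expR_ge0.
have hu : forall m, (1 <= m)%N -> (m <= n)%N -> Num.sqrt (m%:R / n%:R) <= alpha -> 1 <= u m.
  move=> m m1 mn hs; have [hq _] := q_facts m1 mn ha hs.
  by rewrite /u lerDl; apply: ln_ge0.
have Hbad : forall x, ~ (forall (m : nat), (1 <= m <= n)%N ->
        Num.sqrt (m%:R / n%:R) <= alpha ->
        forall I J : {set 'I_n}, #|I| = m -> #|J| = m ->
          (#|[set i in I | ~~ (\sum_(j in J) Abar w x i j <= t)]|)%:R
          <= m%:R * W / (alpha * D)) -> 1 <= G x.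
  move=> x hx; rewrite leNgt; apply/negP => hG; apply: hx.
  move=> m /andP[m1 mn] hs I J hI hJ.
  rewrite leNgt; apply/negP => hlt.
  suff : 1 <= G x by rewrite leNgt hG.
  set Bs := [set i in I | ~~ (\sum_(j in J) Abar w x i j <= t)] in hlt *.
  have hm' : (m < n.+1)%N by rewrite ltnS.
  have aD : 0 < alpha * D by apply: mulr_gt0.
  have hc : cond m Bs J.
    rewrite /cond m1 mn hs /=; apply/and3P; split.
    - rewrite -hI; apply: subset_leq_card; apply/fintype.subsetP => i; rewrite inE => /andP[] //.
    - by apply/eqP.
    - by rewrite -mulrA -ltr_pdivrMr.
  rewrite /G;   apply: le_trans (sum_ge_term (Ordinal hm') _); last first.
    move=> m'; apply: sumr_ge0 => B _; apply: sumr_ge0 => J' _.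
    by case: ifP => _ //; exact: expR_ge0.
  apply: le_trans (sum_ge_term Bs _); last first.
    move=> B; apply: sumr_ge0 => J' _.
    by case: ifP => _ //; exact: expR_ge0.
  apply: le_trans (sum_ge_term J _); last first.
    by move=> J'; case: ifP => _ //; exact: expR_ge0.
  rewrite /= hc; apply: le_trans _ (expR_ge1Dx _); rewrite lerDl.
  apply: mulr_ge0.
    apply: divr_ge0; last exact: ltW.
    by apply: le_trans (hu m m1 mn hs).
  rewrite subr_ge0 SBJ_Abar mulr_natl -sumr_const.
  apply: ler_sum => i; rewrite inE => /andP[_ hi].
  by apply: ltW; rewrite ltNge.
apply: le_trans (Prob_ge hp G0 Hbad).
rewrite lerD2l lerN2.
rewrite /G Ex_sumT.
apply: le_trans (_ : \sum_(m < n.+1) (if (1 <= m)%N then expR (- (r + 1) * ln n%:R) else 0) <= _); last first.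
  rewrite big_ord_recl /= add0r.
  apply: le_trans (_ : \sum_(i < n) expR (- (r + 1) * ln n%:R) <= _).
    by apply: ler_sum => i _; first [ (case: ifP => _ //; exact: expR_ge0) | done ].
  rewrite sumr_const card_ord -(mulr_natl (expR _) n).
  case: (posnP n) => [n0|npos].
    by rewrite n0 mul0r; exact: powR_ge0.
  have en : expR (ln n%:R) = n%:R :> R by rewrite lnK // posrE ltr0n.
  rewrite /powR ifF; last by rewrite gt_eqF // ltr0n.
  rewrite -[X in X * _]en -expRD ler_expR.
  lra.
apply: ler_sum => m _.
rewrite Ex_sumT; under eq_bigr => B _ do rewrite Ex_sumT.
under eq_bigr => B _ do under eq_bigr => J _ do rewrite Ex_if.
case: (boolP [&& (1 <= m)%N, (m <= n)%N & Num.sqrt (m%:R / n%:R) <= alpha]) => hm; last first.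
  rewrite big1; first by case: ifP => _ //; exact: expR_ge0.
  move=> B _; rewrite big1 // => J _; rewrite /cond.
  case: ifP => // /and4P[m1 mn hs _]; move: hm; by rewrite m1 mn hs.
move: hm => /and3P[m1 mn hs]; rewrite m1.
set K := 12 * r - 4.
set q := expR (- (u m * m%:R * K)).
apply: le_trans (_ : \sum_(B : {set 'I_n}) \sum_(J : {set 'I_n}) q *
   ((if (#|B| <= m)%N then 1 else 0) * (if (#|J| <= m)%N then 1 else 0)) <= _).
  apply: ler_sum => B _; apply: ler_sum => J _.
  case: ifP => hc; last first.
    by apply: mulr_ge0; [exact: expR_ge0|apply: mulr_ge0; case: ifP].
  move: hc; rewrite /cond m1 mn hs /= => /and3P[hB /eqP hJ hWl].
  rewrite hB hJ leqnn !mulr1.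
  have n0 : (0 < n)%N by apply: leq_trans mn.
  have hn : 0 < n%:R :> R by rewrite ltr0n.
  have hm0 : 0 < m%:R :> R by rewrite ltr0n.
  have u1 := hu m m1 mn hs.
  have lam0 : 0 <= lam m by apply: divr_ge0; [lra|exact: ltW].
  have hch := chernoff_block hp hw B J (#|B|%:R * t) n0 lam0.
  apply: le_trans hch _.
  rewrite ler_expR.
  have eu : lam m * wmax w = u m by rewrite /lam divfK // lt0r_neq0.
  rewrite eu hJ.
  have qq : 0 < n%:R * alpha / m%:R by rewrite divr_gt0 // mulr_gt0.
  have ez : expR (u m) = expR 1 * (n%:R * alpha / m%:R) by rewrite /u expRD lnK // posrE.
  rewrite ez.
  set b := #|B|%:R.
  have e : expR 1 * (n%:R * alpha / m%:R) * (b * m%:R * (D / n%:R)) = expR 1 * (alpha * (b * D)).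
    by field; rewrite !lt0r_neq0.
  rewrite -/D e /t.
  have hX : 0 <= alpha * (b * D) by apply: mulr_ge0; [exact: ltW|apply: mulr_ge0; [exact: ler0n|exact: ltW]].
  have e4 := expR1_le4 R.
  have key : expR 1 * (alpha * (b * D)) - b * (12 * r * alpha * D) <= - (K * (alpha * (b * D))).
    rewrite /K; nra.
  apply: le_trans (ler_wpM2l lam0 key) _.
  rewrite mulrN lerN2.
  have -> : u m * m%:R * K = lam m * (K * (m%:R * W)) by rewrite /lam; field; exact: lt0r_neq0.
  have K0 : 0 <= K by rewrite /K; lra.
  apply: (ler_wpM2l lam0); apply: (ler_wpM2l K0).
  apply: ltW; move: hWl; rewrite -/W; lra.
pose E1 : R := expR (m%:R * (1 + ln (n%:R / m%:R))).
have hc := count_sets R m1 mn.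
have -> : \sum_(B : {set 'I_n}) \sum_(J : {set 'I_n}) q *
   ((if (#|B| <= m)%N then 1 else 0) * (if (#|J| <= m)%N then 1 else 0)) =
   q * ((\sum_(B : {set 'I_n}) (if (#|B| <= m)%N then 1 else 0)) *
        (\sum_(J : {set 'I_n}) (if (#|J| <= m)%N then 1 else 0))).
  rewrite mulr_suml mulr_sumr; apply: eq_bigr => B _.
  rewrite mulr_sumr mulr_sumr; apply: eq_bigr => J _; ring.
have s0 : 0 <= \sum_(B : {set 'I_n}) (if (#|B| <= m)%N then 1 else 0 : R).
  by apply: sumr_ge0 => B _; case: ifP.
apply: le_trans (_ : q * (E1 * E1) <= _).
  apply: ler_wpM2l; first exact: expR_ge0.
  by apply: ler_pM.
rewrite /q /E1 -!expRD ler_expR.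
have := final_ineq m1 mn ha hs hr.
rewrite /u /K; lra.
Qed.
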